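(* For given cardinality vectors $\boldsymbol\varrho,\boldsymbol\varphi,\boldsymbol\psi$ and any receiver $i$ with $\psi_i\ge1$, the expected primary degree $\Delta_i$ of any vertex induced by receiver $i$ equals \[ \mathbb E[\Delta_i]=\sum_{k=1,k\ne i}^M\frac{\psi_k}{N}\Big(1+\frac{\varrho_k\varrho_i}{N-1}\Big). \]
   Context: A sender holds a frame $\mathcal N$ of $N\ge2$ packets and serves receivers $\mathcal M=\{1,\dots,M\}$. For each receiver $i$ there are sets $\mathcal H_i\subseteq\mathcal N$ (Has set), $\mathcal L_i=\mathcal N\setminus\mathcal H_i$ (Lacks set) and $\mathcal W_i\subseteq\mathcal L_i$ (Wants set), with cardinalities $\varrho_i=|\mathcal H_i|$, $\varphi_i=N-\varrho_i$, $\psi_i=|\mathcal W_i|$. The primary IDNC graph $\mathcal G_\rho$ has a vertex $v_{ij}$ for every receiver $i$ and every $j\in\mathcal W_i$; two distinct vertices $v_{ij},v_{kl}$ are adjacent iff (C1) $j=l$, or (C2) $j\in\mathcal H_k$ and $l\in\mathcal H_i$. The primary degree of a vertex is its degree in $\mathcal G_\rho$. Expectations are taken in the model that ignores set contents: given the cardinalities, the pairs $(\mathcal H_k,\mathcal W_k)$, $k\in\mathcal M$, are independent, $\mathcal H_k$ is a uniformly random $\varrho_k$-element subset of $\mathcal N$, and given $\mathcal H_k$, $\mathcal W_k$ is a uniformly random $\psi_k$-element subset of $\mathcal N\setminus\mathcal H_k$. The expected primary degree of a vertex induced by receiver $i$ means the expected degree of $v_{ij}$ conditioned on $j\in\mathcal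 W_i$, for a fixed packet $j$. *)

(* Defs.v *)
From HB Require Import structures.
From mathcomp Require Import all_boot all_order all_algebra.
Set Implicit Arguments. Unset Strict Implicit. Unset Printing Implicit Defensive.
Import Order.TTheory GRing.Theory Num.Theory.
Local Open Scope ring_scope.

(* Packets are 'I_N, receivers are 'I_M.  A configuration assigns to each
   receiver k its pair (Has set H_k, Wants set W_k). *)
Definition config (N M : nat) := {ffun 'I_M -> {set 'I_N} * {set 'I_N}}.

Definition Has N M (c : config N M) (k : 'I_M) : {set 'I_N} := (c k).1.
Definition Wants N M (c : config N M) (k : 'I_M) : {set 'I_N} := (c k).2.
Definition Lacks N M (c : config N M) (k : 'I_M) : {set 'I_N} := ~: Has c k.

(* Vertices of the primary IDNC graph: v_kl for l in W_k, encoded as (k,l). *)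
Definition is_vertex N M (c : config N M) (v : 'I_M * 'I_N) : bool :=
  v.2 \in Wants c v.1.

Definition idnc_adj N M (c : config N M) (v w : 'I_M * 'I_N) : bool :=
  (v != w) && ((v.2 == w.2) || ((v.2 \in Has c w.1) && (w.2 \in Has c v.1))).

Definition primary_degree N M (c : config N M) (v : 'I_M * 'I_N) : nat :=
  #|[set w | is_vertex c w && idnc_adj c v w]|.

(* Probability of (H_k, W_k) = (H, W): H uniform among rho-subsets,
   and given H, W uniform among psi-subsets of N \ H. *)
Definition pair_prob (R : realFieldType) (N rho psi : nat)
    (p : {set 'I_N} * {set 'I_N}) : R :=
  if [&& #|p.1| == rho, p.2 \subset ~: p.1 & #|p.2| == psi]
  then ('C(N, rho)%:R)^-1 * ('C(N - rho, psi)%:R)^-1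
  else 0.

Definition config_prob (R : realFieldType) (N M : nat)
    (rho psi : 'I_M -> nat) (c : config N M) : R :=
  \prod_(k < M) @pair_prob R N (rho k) (psi k) (c k).

Definition expected_primary_degree (R : realFieldType) (N M : nat)
    (rho psi : 'I_M -> nat) (i : 'I_M) (j : 'I_N) : R :=
  (\sum_(c : config N M) @config_prob R N M rho psi c * (j \in Wants c i)%:R
        * (primary_degree c (i, j))%:R)
  / (\sum_(c : config N M) @config_prob R N M rho psi c * (j \in Wants c i)%:R).

(* Main.v *)
Require Import Defs.
From HB Require Import structures.
From mathcomp Require Import all_boot all_order all_algebra all_fingroup.
From mathcomp Require Import zify ring lra.
Import Order.TTheory GRing.Theory Num.Theory.
Local Open Scope ring_scope.

Notation PT N := ({set 'I_N} * {set 'I_N})%type.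

Lemma pp_nz (R : realFieldType) N rho psi (p : PT N) :
  @pair_prob R N rho psi p != 0 ->
  [/\ #|p.1| = rho, p.2 \subset ~: p.1 & #|p.2| = psi].
Proof.
rewrite /pair_prob; case: and3P => [[/eqP ? ? /eqP ?] _|]; last by rewrite eqxx.
by split.
Qed.

Lemma pp_eq (R : realFieldType) N rho psi (p : PT N) (x y : R) :
  (@pair_prob R N rho psi p != 0 -> x = y) ->
  @pair_prob R N rho psi p * x = @pair_prob R N rho psi p * y.
Proof.
move=> H; case: (eqVneq (@pair_prob R N rho psi p) 0) => [->|/H ->];
  by rewrite ?mul0r.
Qed.

Lemma pp_sum (R : realFieldType) N rho psi : (rho + psi <= N)%N ->
  \sum_(p : PT N) @pair_prob R N rho psi p = 1.
Proof.
move=> h.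
rewrite -(pair_big xpredT xpredT (fun H W => @pair_prob R N rho psi (H, W))) /=.
have inner : forall H : {set 'I_N}, \sum_(W : {set 'I_N}) @pair_prob R N rho psi (H, W)
  = if #|H| == rho then ('C(N, rho)%:R)^-1 * ('C(N - rho, psi)%:R)^-1 * 'C(N - rho, psi)%:R else 0.
  move=> H; rewrite /pair_prob /=.
  case: eqP => [hH|_]; last by rewrite big1.
  rewrite /= -big_mkcond /=.
  transitivity (\sum_(W in [set W : {set 'I_N} | W \subset ~: H & #|W| == psi])
      (('C(N, rho)%:R)^-1 * ('C(N - rho, psi)%:R : R)^-1)).
    by apply: eq_bigl => W; rewrite inE.
  by rewrite sumr_const cards_draws cardsCs setCK card_ord hH mulr_natr.
rewrite (eq_bigr _ (fun H _ => inner H)) -big_mkcond /=.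
transitivity (\sum_(H in [set H : {set 'I_N} | #|H| == rho])
   (('C(N, rho)%:R)^-1 * ('C(N - rho, psi)%:R)^-1 * ('C(N - rho, psi)%:R : R))).
  by apply: eq_bigl => W; rewrite inE.
rewrite sumr_const card_draws card_ord -mulr_natr.
have h1 : ('C(N, rho)%:R : R) != 0 by rewrite pnatr_eq0 -lt0n bin_gt0; lia.
have h2 : ('C(N - rho, psi)%:R : R) != 0 by rewrite pnatr_eq0 -lt0n bin_gt0; lia.
by field; rewrite h1 h2.
Qed.

Definition pact {N} (s : {perm 'I_N}) (p : PT N) : PT N := (s @: p.1, s @: p.2).

Lemma pact_inj N (s : {perm 'I_N}) : injective (pact s).
Proof.
move=> [H1 W1] [H2 W2]; rewrite /pact /= => -[e1 e2].
by rewrite (imset_inj (@perm_inj _ s) e1) (imset_inj (@perm_inj _ s) e2).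
Qed.

Lemma pp_pact (R : realFieldType) N rho psi (s : {perm 'I_N}) p :
  @pair_prob R N rho psi (pact s p) = @pair_prob R N rho psi p.
Proof.
rewrite /pair_prob /pact /=.
rewrite !card_imset; try exact: perm_inj.
rewrite -!disjoints_subset -!setI_eq0 -imsetI ?imset_eq0 //.
by move=> x y _ _; apply: perm_inj.
Qed.

Lemma pp_inv (R : realFieldType) N rho psi (s : {perm 'I_N}) (g : PT N -> R) :
  \sum_p @pair_prob R N rho psi p * g (pact s p) =
  \sum_p @pair_prob R N rho psi p * g p.
Proof.
rewrite [RHS](reindex_inj (@pact_inj N s)) /=.
by apply: eq_bigr => p _; rewrite pp_pact.
Qed.

Definition sel {N} (b : bool) (p : PT N) := if b then p.1 else p.2.

Lemma sel_pact N b (s : {perm 'I_N}) p : sel b (pact s p) = s @: sel b p.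
Proof. by case: b. Qed.

Lemma pp_sel_card (R : realFieldType) N rho psi (p : PT N) b :
  @pair_prob R N rho psi p != 0 -> #|sel b p| = if b then rho else psi.
Proof. by case/pp_nz => h1 _ h2; case: b. Qed.

Lemma pp_disj (R : realFieldType) N rho psi (p : PT N) b x :
  @pair_prob R N rho psi p != 0 -> x \in sel (~~ b) p -> (x \in sel b p) = false.
Proof.
case/pp_nz => _ /subsetP hs _; case: b => /= hx; apply/negP => hy.
  by have := hs _ hx; rewrite inE hy.
by have := hs _ hy; rewrite inE hx.
Qed.

Lemma pp_sum_eq (R : realFieldType) N rho psi (x y : PT N -> R) :
  (forall p, @pair_prob R N rho psi p != 0 -> x p = y p) ->
  \sum_p @pair_prob R N rho psi p * x p = \sum_p @pair_prob R N rho psi p * y p.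
Proof. by move=> h; apply: eq_bigr => p _; apply: pp_eq; apply: h. Qed.

Lemma sum_ind (R : realFieldType) N (A : {set 'I_N}) :
  \sum_(j : 'I_N) ((j \in A)%:R : R) = #|A|%:R.
Proof.
rewrite -sum1_card natr_sum [RHS]big_mkcond /=; apply: eq_bigr => j _.
by case: (j \in A).
Qed.

Lemma E_sel (R : realFieldType) N rho psi b (j : 'I_N) :
  (rho + psi <= N)%N -> (0 < N)%N ->
  \sum_p @pair_prob R N rho psi p * (j \in sel b p)%:R =
  (if b then rho else psi)%:R / N%:R.
Proof.
move=> h hN.
have c : forall j', \sum_p @pair_prob R N rho psi p * (j \in sel b p)%:R =
                  \sum_p @pair_prob R N rho psi p * (j' \in sel b p)%:R.
  move=> j'; rewrite -(pp_inv R N rho psi (tperm j j') (fun p => (j' \in sel b p)%:R)) /=.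
  apply: eq_bigr => p _; rewrite sel_pact -[X in X \in imset _ _](tpermL j j') mem_imset //.
  exact: perm_inj.
have : \sum_(j' : 'I_N) \sum_p @pair_prob R N rho psi p * (j' \in sel b p)%:R =
       (if b then rho else psi)%:R.
  rewrite exchange_big /=.
  under eq_bigr do rewrite -mulr_sumr sum_ind.
  rewrite (pp_sum_eq R N rho psi _ (fun _ => (if b then rho else psi)%:R)).
    by rewrite -mulr_suml pp_sum // mul1r.
  by move=> p /(pp_sel_card R N rho psi p b) ->.
under eq_bigr do rewrite -c.
rewrite sumr_const card_ord => <-.
have hN' : (N%:R : R) != 0 by rewrite pnatr_eq0 -lt0n.
by rewrite -[_ *+ N]mulr_natr mulfK.
Qed.

Lemma E_pair (R : realFieldType) N rho psi b (j l : 'I_N) :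
  (rho + psi <= N)%N -> (1 < N)%N -> l != j ->
  \sum_p @pair_prob R N rho psi p * ((l \in sel b p)%:R * (j \in sel (~~ b) p)%:R) =
  (if b then rho else psi)%:R * (if ~~ b then rho else psi)%:R / (N%:R * (N%:R - 1)).
Proof.
move=> h hN hlj.
set C := fun l => \sum_p @pair_prob R N rho psi p *
   ((l \in sel b p)%:R * (j \in sel (~~ b) p)%:R).
have c : forall l', l' != j -> C l' = C l.
  move=> l' hl'; rewrite /C -(pp_inv R N rho psi (tperm l l')
     (fun p => (l' \in sel b p)%:R * (j \in sel (~~ b) p)%:R)) /=.
  apply: eq_bigr => p _; rewrite !sel_pact.
  rewrite -[X in X \in imset _ (mem (sel b p))](tpermL l l').
  rewrite -[X in X \in imset _ (mem (sel (~~ b) p))](tpermD hlj hl').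
  by rewrite !mem_imset //; exact: perm_inj.
have s1 : \sum_(l' | l' != j) C l' = C l *+ N.-1.
  rewrite (eq_bigr (fun _ => C l)); last by move=> l' /c.
  transitivity (\sum_(l' in predC1 j) C l); first by apply: eq_bigl => x; rewrite inE.
  by rewrite sumr_const cardC1 card_ord.
have s2 : \sum_(l' | l' != j) C l' =
   (if b then rho else psi)%:R * ((if ~~ b then rho else psi)%:R / N%:R).
  rewrite /C exchange_big /=.
  under eq_bigr => p _ do rewrite -mulr_sumr.
  rewrite -(E_sel R N rho psi (~~ b) j h (ltnW hN)) mulr_sumr.
  under [RHS]eq_bigr => p _ do rewrite mulrCA.
  apply: pp_sum_eq => p hp.
  rewrite -mulr_suml.
  case hj: (j \in sel (~~ b) p); last by rewrite /= !(mulr0n, mulr0).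
  congr (_ * _).
  rewrite -(pp_sel_card R N rho psi p b hp) -sum_ind [RHS](bigD1 j) //=.
  by rewrite (pp_disj R N rho psi p b j hp hj) add0r.
have hN1 : (N%:R - 1 : R) != 0.
  by rewrite -(natrB R (ltnW hN)) pnatr_eq0 subn_eq0 -ltnNge.
have hN0 : (N%:R : R) != 0 by rewrite pnatr_eq0 -lt0n; lia.
have : C l * (N%:R - 1) = (if b then rho else psi)%:R * ((if ~~ b then rho else psi)%:R / N%:R).
  rewrite -s2 s1 -[_ *+ N.-1]mulr_natr; congr (_ * _).
  by rewrite -(natrB R (ltnW hN)) subn1.
move=> e; rewrite /C in e *.
apply: (mulIf hN1); rewrite e.
by field; rewrite hN0 hN1.
Qed.

Lemma sum_indT (R : realFieldType) (T : finType) (A : {set T}) :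
  \sum_(j : T) ((j \in A)%:R : R) = #|A|%:R.
Proof.
rewrite -sum1_card natr_sum [RHS]big_mkcond /=; apply: eq_bigr => j _.
by case: (j \in A).
Qed.

Lemma deg_eq (R : realFieldType) N M (c : config N M) (i : 'I_M) (j : 'I_N) :
  (j \in Wants c i -> j \notin Has c i) ->
  ((j \in Wants c i)%:R : R) * (primary_degree c (i, j))%:R =
  \sum_(k < M | k != i) \sum_(l < N)
    ((j \in Wants c i)%:R * ((l == j)%:R * (l \in Wants c k)%:R) +
     ((j \in Wants c i)%:R * (l \in Has c i)%:R) *
       ((l != j)%:R * ((l \in Wants c k)%:R * (j \in Has c k)%:R))).
Proof.
move=> hH.
case hj: (j \in Wants c i); last first.
  rewrite mul0r big1 // => k _; rewrite big1 // => l _.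
  by rewrite !mul0r add0r.
have hjH : j \in Has c i = false by apply/negbTE/hH.
rewrite mul1r /primary_degree -sum_indT.
have -> : \sum_(w : 'I_M * 'I_N) ((w \in
   [set w | is_vertex c w && idnc_adj c (i, j) w])%:R : R) =
   \sum_(k < M) \sum_(l < N) (((k, l) \in
   [set w | is_vertex c w && idnc_adj c (i, j) w])%:R : R).
  by rewrite pair_bigA; apply: eq_bigr => -[k l].
rewrite (bigD1 i) //= big1 ?add0r; last first.
  move=> l _; rewrite inE /is_vertex /idnc_adj /= xpair_eqE eqxx /= hjH /=.
  by rewrite orbF; case: (j == l); rewrite ?andbF.
apply: eq_bigr => k hk; apply: eq_bigr => l _.
rewrite !mul1r inE /is_vertex /idnc_adj /= xpair_eqE eq_sym (negbTE hk) /=.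
rewrite -!natrM -natrD; congr (_%:R).
rewrite (eq_sym j l).
by case: (l == j); case: (l \in Wants c k); case: (j \in Has c k);
   case: (l \in Has c i).
Qed.

Lemma prod_sum (R : realFieldType) N M (F : 'I_M -> PT N -> R) :
  \sum_(c : config N M) \prod_(m < M) F m (c m) = \prod_(m < M) \sum_(t : PT N) F m t.
Proof. by rewrite bigA_distr_bigA. Qed.

Lemma two_coord (R : realFieldType) N M (rho psi : 'I_M -> nat)
  (hcard : forall k : 'I_M, (rho k + psi k <= N)%N)
  (i k : 'I_M) (hki : k != i) (A B : PT N -> R) :
  \sum_(c : config N M) @config_prob R N M rho psi c * (A (c i) * B (c k)) =
  (\sum_t @pair_prob R N (rho i) (psi i) t * A t) *
  (\sum_t @pair_prob R N (rho k) (psi k) t * B t).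
Proof.
pose g := fun (m : 'I_M) (t : PT N) => if m == i then A t else if m == k then B t else 1.
transitivity (\sum_(c : config N M) \prod_(m < M)
   (@pair_prob R N (rho m) (psi m) (c m) * g m (c m))).
  apply: eq_bigr => c _; rewrite big_split /=; congr (_ * _).
  rewrite (bigD1 i) //= (bigD1 k) //= big1 ?mulr1.
    by rewrite /g eqxx (negbTE hki) eqxx.
  by move=> m /andP[hmi hmk]; rewrite /g (negbTE hmi) (negbTE hmk).
rewrite (prod_sum R N M (fun m t => @pair_prob R N (rho m) (psi m) t * g m t)) (bigD1 i) //= (bigD1 k) //=.
rewrite [X in _ * (_ * X)]big1 ?mulr1.
  by congr (_ * _); apply: eq_bigr => t _; rewrite /g ?eqxx // (negbTE hki) ?eqxx.
move=> m /andP[hmi hmk]; rewrite /g (negbTE hmi) (negbTE hmk).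
under eq_bigr do rewrite mulr1.
exact: pp_sum.
Qed.

Lemma one_coord (R : realFieldType) N M (rho psi : 'I_M -> nat)
  (hcard : forall k : 'I_M, (rho k + psi k <= N)%N)
  (i : 'I_M) (A : PT N -> R) :
  \sum_(c : config N M) @config_prob R N M rho psi c * A (c i) =
  \sum_t @pair_prob R N (rho i) (psi i) t * A t.
Proof.
pose g := fun (m : 'I_M) (t : PT N) => if m == i then A t else 1.
transitivity (\sum_(c : config N M) \prod_(m < M)
   (@pair_prob R N (rho m) (psi m) (c m) * g m (c m))).
  apply: eq_bigr => c _; rewrite big_split /=; congr (_ * _).
  rewrite (bigD1 i) //= big1 ?mulr1; first by rewrite /g eqxx.
  by move=> m hmi; rewrite /g (negbTE hmi).
rewrite (prod_sum R N M (fun m t => @pair_prob R N (rho m) (psi m) t * g m t)) (bigD1 i) //=.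
rewrite [X in _ * X]big1 ?mulr1.
  by apply: eq_bigr => t _; rewrite /g eqxx.
move=> m hmi; rewrite /g (negbTE hmi).
under eq_bigr do rewrite mulr1.
exact: pp_sum.
Qed.

Theorem theorem6 (R : realFieldType) (N M : nat) (rho psi : 'I_M -> nat)
    (hN : (2 <= N)%N)
    (hcard : forall k : 'I_M, (rho k + psi k <= N)%N)
    (i : 'I_M) (hpsi : (1 <= psi i)%N) (j : 'I_N) :
  @expected_primary_degree R N M rho psi i j =
  \sum_(k < M | k != i)
     ((psi k)%:R / N%:R * (1 + (rho k)%:R * (rho i)%:R / (N%:R - 1))).
Proof.
have hN0 : (N%:R : R) != 0 by rewrite pnatr_eq0 -lt0n; lia.
have hN1 : (N%:R - 1 : R) != 0.
  by rewrite -(natrB R (ltnW hN)) pnatr_eq0 subn_eq0 -ltnNge.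
have hp0 : ((psi i)%:R : R) != 0 by rewrite pnatr_eq0 -lt0n.
rewrite /expected_primary_degree.
have eD : \sum_(c : config N M) @config_prob R N M rho psi c * (j \in Wants c i)%:R
    = (psi i)%:R / N%:R.
  rewrite -(E_sel R N (rho i) (psi i) false j (hcard i) (ltnW hN)).
  exact: (one_coord R N M rho psi hcard i (fun t => (j \in sel false t)%:R)).
rewrite eD.
pose T1 (c : config N M) (k : 'I_M) (l : 'I_N) : R :=
  (j \in Wants c i)%:R * ((l == j)%:R * (l \in Wants c k)%:R).
pose T2 (c : config N M) (k : 'I_M) (l : 'I_N) : R :=
  ((j \in Wants c i)%:R * (l \in Has c i)%:R) *
       ((l != j)%:R * ((l \in Wants c k)%:R * (j \in Has c k)%:R)).
have step1 : forall c : config N M,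
   @config_prob R N M rho psi c * (j \in Wants c i)%:R * (primary_degree c (i, j))%:R =
   @config_prob R N M rho psi c * \sum_(k < M | k != i) \sum_(l < N) (T1 c k l + T2 c k l).
  move=> c; rewrite -mulrA.
  case: (eqVneq (@pair_prob R N (rho i) (psi i) (c i)) 0) => hci.
    by rewrite /config_prob (bigD1 i) //= hci !mul0r.
  congr (_ * _); apply: deg_eq.
  case/pp_nz: hci => _ /subsetP hs _ hj.
  by have := hs _ hj; rewrite inE.
rewrite (eq_bigr _ (fun c _ => step1 c)).
under eq_bigr do rewrite mulr_sumr.
rewrite exchange_big /=.
have t1 : forall k l, k != i -> \sum_(c : config N M) @config_prob R N M rho psi c * T1 c k l
    = (l == j)%:R * ((psi i)%:R / N%:R * ((psi k)%:R / N%:R)).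
  move=> k l hki.
  transitivity ((\sum_t @pair_prob R N (rho i) (psi i) t * (j \in sel false t)%:R) *
      (\sum_t @pair_prob R N (rho k) (psi k) t * ((l == j)%:R * (l \in sel false t)%:R))).
    exact: (two_coord R N M rho psi hcard i k hki (fun t => (j \in sel false t)%:R)
                     (fun t => ((l == j)%:R * (l \in sel false t)%:R))).
  rewrite E_sel //; last exact: ltnW.
  under eq_bigr do rewrite mulrCA.
  by rewrite -mulr_sumr E_sel //; [rewrite mulrCA | exact: ltnW].
have t2 : forall k l, k != i -> \sum_(c : config N M) @config_prob R N M rho psi c * T2 c k l
    = (l != j)%:R * (((psi i)%:R * (rho i)%:R / (N%:R * (N%:R - 1))) *
                     ((psi k)%:R * (rho k)%:R / (N%:R * (N%:R - 1)))).
  move=> k l hki.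
  transitivity ((\sum_t @pair_prob R N (rho i) (psi i) t *
          ((j \in sel false t)%:R * (l \in sel (~~ false) t)%:R)) *
      (\sum_t @pair_prob R N (rho k) (psi k) t *
          ((l != j)%:R * ((l \in sel false t)%:R * (j \in sel (~~ false) t)%:R)))).
    exact: (two_coord R N M rho psi hcard i k hki
       (fun t => (j \in sel false t)%:R * (l \in sel (~~ false) t)%:R)
       (fun t => (l != j)%:R * ((l \in sel false t)%:R * (j \in sel (~~ false) t)%:R))).
  case: (eqVneq l j) => hlj.
    rewrite /= [X in _ * X]big1 ?mulr0 ?mul0r // => t _.
    by rewrite !mul0r mulr0.
  under [X in _ * X]eq_bigr do rewrite mulrCA.
  rewrite -mulr_sumr (E_pair R N (rho k) (psi k) false j l) //.
  rewrite (E_pair R N (rho i) (psi i) false l j) //; last by rewrite eq_sym.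
  by rewrite /= mulrCA.
have hk : forall k, k != i ->
  \sum_(l < N) \sum_(c : config N M) @config_prob R N M rho psi c * (T1 c k l + T2 c k l)
  = (psi i)%:R / N%:R *
    ((psi k)%:R / N%:R * (1 + (rho k)%:R * (rho i)%:R / (N%:R - 1))).
  move=> k hki.
  under eq_bigr do rewrite (eq_bigr _ (fun c _ => mulrDr _ _ _)) big_split /= t1 // t2 //.
  rewrite big_split /= -!mulr_suml.
  rewrite (bigD1 j) //= eqxx big1 ?addr0; last by move=> l /negbTE ->.
  under eq_bigr do rewrite -in_setC1.
  rewrite sum_indT cardsC1 card_ord.
  rewrite -subn1 (natrB R (ltnW hN)) /=.
  by field; rewrite hN0 hN1.
rewrite (eq_bigr (fun k => \sum_(l < N) \sum_(c : config N M)
   @config_prob R N M rho psi c * (T1 c k l + T2 c k l))); last first.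
  by move=> k _; under eq_bigr do rewrite mulr_sumr; rewrite exchange_big.
rewrite (eq_bigr _ (fun k hki => hk k hki)) -mulr_sumr mulrC mulKf //.
by rewrite mulf_neq0 // invr_eq0.
Qed.
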